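(* Let $h>0$ and $J>0$ with $\lambda=J/h<8/9$ (i.e. $\lambda\lesssim 0.89$), let $\Gamma_{abs}>0$ and $\Gamma^x_{dph}>0$. Consider the two-qubit battery Hamiltonian $H_B$ and initial state $\rho_0$ described in the context, and for $\Gamma\ge 0$ let $\rho^{(\Gamma)}_t$ be the solution of the master equation $$\frac{d\rho}{dt}=-i[H_B,\rho]+\Gamma_{abs}\sum_{j=1}^{2}\Big(\sigma^+_j\rho\,\sigma^-_j-\tfrac12\{\sigma^-_j\sigma^+_j,\rho\}\Big)+\Gamma\sum_{j=1}^{2}\big(\sigma^x_j\rho\,\sigma^x_j-\rho\big),\qquad \rho(0)=\rho_0 .$$ Define the work gained $W_\Gamma(t)=\mathrm{Tr}(H_B\rho^{(\Gamma)}_t)-\mathrm{Tr}(H_B\rho_0)$. Then, in the transient regime, the work gained with local bit-flip noise exceeds the work gained without noise: there exists $t^*>0$ such that $W_{\Gamma^x_{dph}}(t)>W_0(t)$ for all $0<t<t^*$.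
   Context: Two qubits with computational basis $|00\rangle,|01\rangle,|10\rangle,|11\rangle$, where $\sigma^z|0\rangle=|0\rangle$, $\sigma^z|1\rangle=-|1\rangle$. $\sigma^x,\sigma^y,\sigma^z$ are the Pauli matrices, $\sigma^{\pm}=(\sigma^x\pm i\sigma^y)/2$, and $\sigma^a_1=\sigma^a\otimes I$, $\sigma^a_2=I\otimes\sigma^a$. The battery Hamiltonian (two-spin transverse Ising model) is, in the computational basis, $$H_B=\begin{pmatrix} h&0&0&J/4\\ 0&0&J/4&0\\ 0&J/4&0&0\\ J/4&0&0&-h\end{pmatrix}.$$ Set $e_0=-\sqrt{h^2+\tfrac{5J^2}{8}}$, $p=\frac{4(h+e_0)}{J}$, and let the initial state be $$\rho_0=\frac{1}{1+p^2}\begin{pmatrix} p^2&0&0&p\\ 0&0&0&0\\ 0&0&0&0\\ p&0&0&1\end{pmatrix}.$$ The terms with $\Gamma_{abs}$ model a local bosonic reservoir charging each spin (absorption channel); the terms with $\Gamma$ model local bit-flip (dephasing along $x$) noise on each spin; $\Gamma=0$ is the noiseless case. *)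

(* Defs.v *)
From Stdlib Require Import Reals Lra.
From Coquelicot Require Import Coquelicot.
Open Scope R_scope.

(* Complex 4x4 (and 2x2) matrices as entry functions; only indices 0..3
   (resp. 0..1) are meaningful.  Computational basis ordering:
   0 = |00>, 1 = |01>, 2 = |10>, 3 = |11>  (first qubit = high bit). *)
Definition Mat := nat -> nat -> C.

Definition mmul (A B : Mat) : Mat := fun i j =>
  Cplus (Cplus (Cmult (A i 0%nat) (B 0%nat j)) (Cmult (A i 1%nat) (B 1%nat j)))
        (Cplus (Cmult (A i 2%nat) (B 2%nat j)) (Cmult (A i 3%nat) (B 3%nat j))).
Definition madd (A B : Mat) : Mat := fun i j => Cplus (A i j) (B i j).
Definition msub (A B : Mat) : Mat := fun i j => Cminus (A i j) (B i j).
Definition mscale (c : C) (A : Mat) : Mat := fun i j => Cmult c (A i j).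
Definition comm (A B : Mat) : Mat := msub (mmul A B) (mmul B A).
Definition acomm (A B : Mat) : Mat := madd (mmul A B) (mmul B A).
Definition trace (A : Mat) : C :=
  Cplus (Cplus (A 0%nat 0%nat) (A 1%nat 1%nat)) (Cplus (A 2%nat 2%nat) (A 3%nat 3%nat)).

Definition I2 : Mat := fun a b =>
  match a, b with 0, 0 => RtoC 1 | 1, 1 => RtoC 1 | _, _ => RtoC 0 end%nat.
Definition sx : Mat := fun a b =>
  match a, b with 0, 1 => RtoC 1 | 1, 0 => RtoC 1 | _, _ => RtoC 0 end%nat.
Definition sy : Mat := fun a b =>
  match a, b with 0, 1 => Copp Ci | 1, 0 => Ci | _, _ => RtoC 0 end%nat.
Definition sz : Mat := fun a b =>
  match a, b with 0, 0 => RtoC 1 | 1, 1 => RtoC (-1) | _, _ => RtoC 0 end%nat.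
Definition splus : Mat := fun a b => Cmult (RtoC (1/2)) (Cplus (sx a b) (Cmult Ci (sy a b))).
Definition sminus : Mat := fun a b => Cmult (RtoC (1/2)) (Cminus (sx a b) (Cmult Ci (sy a b))).

Definition kron (A B : Mat) : Mat := fun i j =>
  Cmult (A (i / 2)%nat (j / 2)%nat) (B (i mod 2)%nat (j mod 2)%nat).
Definition on1 (A : Mat) : Mat := kron A I2.
Definition on2 (A : Mat) : Mat := kron I2 A.

Definition HB (h J : R) : Mat := fun i j =>
  match i, j with
  | 0, 0 => RtoC h
  | 0, 3 => RtoC (J / 4) | 1, 2 => RtoC (J / 4)
  | 2, 1 => RtoC (J / 4) | 3, 0 => RtoC (J / 4)
  | 3, 3 => RtoC (- h)
  | _, _ => RtoC 0 end%nat.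

Definition e0 (h J : R) : R := - sqrt (h ^ 2 + 5 * J ^ 2 / 8).
Definition pp (h J : R) : R := 4 * (h + e0 h J) / J.

Definition rho0 (h J : R) : Mat := fun i j =>
  let p := pp h J in
  match i, j with
  | 0, 0 => RtoC (p ^ 2 / (1 + p ^ 2))
  | 0, 3 => RtoC (p / (1 + p ^ 2)) | 3, 0 => RtoC (p / (1 + p ^ 2))
  | 3, 3 => RtoC (1 / (1 + p ^ 2))
  | _, _ => RtoC 0 end%nat.

Definition dissip_abs (s : Mat -> Mat) (rho : Mat) : Mat :=
  msub (mmul (mmul (s splus) rho) (s sminus))
       (mscale (RtoC (1/2)) (acomm (mmul (s sminus) (s splus)) rho)).
Definition dissip_bf (s : Mat -> Mat) (rho : Mat) : Mat :=
  msub (mmul (mmul (s sx) rho) (s sx)) rho.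

Definition lindblad (h J Gabs G : R) (rho : Mat) : Mat :=
  madd (mscale (Copp Ci) (comm (HB h J) rho))
  (madd (mscale (RtoC Gabs) (madd (dissip_abs on1 rho) (dissip_abs on2 rho)))
        (mscale (RtoC G) (madd (dissip_bf on1 rho) (dissip_bf on2 rho)))).

Definition is_solution (h J Gabs G : R) (rho : R -> Mat) : Prop :=
  (forall i j, (i < 4)%nat -> (j < 4)%nat -> rho 0 i j = rho0 h J i j) /\
  (forall i j, (i < 4)%nat -> (j < 4)%nat ->
     filterlim (fun t => rho t i j) (at_right 0) (locally (rho0 h J i j))) /\
  (forall t i j, 0 < t -> (i < 4)%nat -> (j < 4)%nat ->
     is_derive (fun s => rho s i j) t (lindblad h J Gabs G (rho t) i j)).

(* Work gained: Tr(H_B rho_t) - Tr(H_B rho_0) (real part; it is real). *)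
Definition work (h J : R) (rho : R -> Mat) (t : R) : R :=
  Re (trace (mmul (HB h J) (rho t))) - Re (trace (mmul (HB h J) (rho0 h J))).

(* Main.v *)
Require Import Defs.
From Stdlib Require Import Reals Lra Lia.
From Coquelicot Require Import Coquelicot.
Open Scope R_scope.
Definition cvR (f : R -> R) (z : R) := filterlim f (at_right 0) (locally z).
Definition cvC (f : R -> C) (z : C) := filterlim f (at_right 0) (locally z).
Lemma cvR_mult f g a b : cvR f a -> cvR g b -> cvR (fun t => f t * g t) (a * b).
Proof. intros Hf Hg. unfold cvR.
 eapply filterlim_comp_2. exact Hf. exact Hg. exact (@filterlim_mult R_AbsRing a b). Qed.
Lemma cvR_plus f g a b : cvR f a -> cvR g b -> cvR (fun t => f t + g t) (a + b).
Proof. intros Hf Hg. unfold cvR.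
 eapply filterlim_comp_2. exact Hf. exact Hg. exact (@filterlim_plus R_AbsRing _ a b). Qed.
Lemma cvR_opp f a : cvR f a -> cvR (fun t => - f t) (- a).
Proof. intros Hf. unfold cvR.
 eapply filterlim_comp. exact Hf. exact (@filterlim_opp R_AbsRing _ a). Qed.
Lemma cvR_minus f g a b : cvR f a -> cvR g b -> cvR (fun t => f t - g t) (a - b).
Proof. intros. unfold Rminus. apply cvR_plus; auto. apply cvR_opp; auto. Qed.
Lemma cvR_const a : cvR (fun _ => a) a.
Proof. apply filterlim_const. Qed.
Lemma cvC_iff f z : cvC f z <-> cvR (fun t => fst (f t)) (fst z) /\ cvR (fun t => snd (f t)) (snd z).
Proof.
 unfold cvC, cvR. rewrite !filterlim_locally. split.
 - intros H. split; intros eps; generalize (H eps); apply filter_imp; intros x [H1 H2]; assumption.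
 - intros [H1 H2] eps. generalize (filter_and _ _ (H1 eps) (H2 eps)); apply filter_imp.
   intros x [A B]. split; assumption.
Qed.
Lemma cvC_plus f g a b : cvC f a -> cvC g b -> cvC (fun t => Cplus (f t) (g t)) (Cplus a b).
Proof. rewrite !cvC_iff. intros [A B] [C D]; simpl; split; apply cvR_plus; auto. Qed.
Lemma cvC_mult f g a b : cvC f a -> cvC g b -> cvC (fun t => Cmult (f t) (g t)) (Cmult a b).
Proof. rewrite !cvC_iff. intros [A B] [C D]; simpl; split.
 apply cvR_minus; apply cvR_mult; auto. apply cvR_plus; apply cvR_mult; auto. Qed.
Lemma cvC_opp f a : cvC f a -> cvC (fun t => Copp (f t)) (Copp a).
Proof. rewrite !cvC_iff. intros [A B]; simpl; split; apply cvR_opp; auto. Qed.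
Lemma cvC_minus f g a b : cvC f a -> cvC g b -> cvC (fun t => Cminus (f t) (g t)) (Cminus a b).
Proof. intros. unfold Cminus. apply cvC_plus; auto. apply cvC_opp; auto. Qed.
Lemma cvC_const a : cvC (fun _ => a) a.
Proof. apply filterlim_const. Qed.

Definition Mcv (M : R -> Mat) (M0 : Mat) :=
  forall i j, (i < 4)%nat -> (j < 4)%nat -> cvC (fun t => M t i j) (M0 i j).
Lemma Mcv_mmul A A0 B B0 : Mcv A A0 -> Mcv B B0 -> Mcv (fun t => mmul (A t) (B t)) (mmul A0 B0).
Proof. intros HA HB i j Hi Hj. unfold mmul.
 assert (P : forall k, (k<4)%nat -> cvC (fun t => Cmult (A t i k) (B t k j)) (Cmult (A0 i k) (B0 k j))).
 { intros k Hk. apply cvC_mult; [apply HA | apply HB]; auto. }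
 apply cvC_plus; apply cvC_plus; apply P; lia.
Qed.
Lemma Mcv_const K : Mcv (fun _ => K) K.
Proof. intros i j _ _. apply cvC_const. Qed.
Lemma Mcv_madd A A0 B B0 : Mcv A A0 -> Mcv B B0 -> Mcv (fun t => madd (A t) (B t)) (madd A0 B0).
Proof. intros HA HB i j Hi Hj. unfold madd. apply cvC_plus; auto. Qed.
Lemma Mcv_msub A A0 B B0 : Mcv A A0 -> Mcv B B0 -> Mcv (fun t => msub (A t) (B t)) (msub A0 B0).
Proof. intros HA HB i j Hi Hj. unfold msub. apply cvC_minus; auto. Qed.
Lemma Mcv_mscale c A A0 : Mcv A A0 -> Mcv (fun t => mscale c (A t)) (mscale c A0).
Proof. intros HA i j Hi Hj. unfold mscale. apply cvC_mult; auto. apply cvC_const. Qed.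

Lemma Mcv_lindblad h J Ga G A A0 : Mcv A A0 ->
  Mcv (fun t => lindblad h J Ga G (A t)) (lindblad h J Ga G A0).
Proof.
 intros HA. unfold lindblad, comm, acomm, dissip_abs, dissip_bf.
 apply Mcv_madd. apply Mcv_mscale. apply Mcv_msub; apply Mcv_mmul; auto using Mcv_const.
 apply Mcv_madd. apply Mcv_mscale. apply Mcv_madd.
 apply Mcv_msub. apply Mcv_mmul; auto using Mcv_const. apply Mcv_mmul; auto using Mcv_const.
 apply Mcv_mscale. apply Mcv_madd; apply Mcv_mmul; auto using Mcv_const.
 apply Mcv_msub. apply Mcv_mmul; auto using Mcv_const. apply Mcv_mmul; auto using Mcv_const.
 apply Mcv_mscale. apply Mcv_madd; apply Mcv_mmul; auto using Mcv_const.
 apply Mcv_mscale. apply Mcv_madd; apply Mcv_msub; auto; apply Mcv_mmul; auto using Mcv_const;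
 apply Mcv_mmul; auto using Mcv_const.
Qed.

Definition phi (h J : R) (M : Mat) : R :=
  h * fst (M 0%nat 0%nat) + J/4 * (fst (M 0%nat 3%nat) + fst (M 1%nat 2%nat) + fst (M 2%nat 1%nat) + fst (M 3%nat 0%nat))
  - h * fst (M 3%nat 3%nat).

Lemma Mcv_phi h J A A0 : Mcv A A0 -> cvR (fun t => phi h J (A t)) (phi h J A0).
Proof.
 intros HA. unfold phi.
 assert (F : forall i j, (i<4)%nat -> (j<4)%nat -> cvR (fun t => fst (A t i j)) (fst (A0 i j))).
 { intros i j Hi Hj. apply cvC_iff. apply HA; auto. }
 apply cvR_minus. apply cvR_plus. apply cvR_mult. apply cvR_const. apply F; lia.
 apply cvR_mult. apply cvR_const.
 repeat apply cvR_plus; apply F; lia.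
 apply cvR_mult. apply cvR_const. apply F; lia.
Qed.

Lemma is_derive_fst (f : R -> C) t l :
  is_derive f t l -> is_derive (fun s => fst (f s)) t (fst l).
Proof.
 intros H. unfold is_derive in *.
 apply (filterdiff_comp f (fun z : R * R => fst z) _ (fun z : R*R => fst z) H).
 apply filterdiff_linear. apply is_linear_fst.
Qed.

Lemma phi_derive h J (A : R -> Mat) L t :
  (forall i j, (i<4)%nat -> (j<4)%nat -> is_derive (fun s => A s i j) t (L i j)) ->
  is_derive (fun s => phi h J (A s)) t (phi h J L).
Proof.
 intros HA.
 assert (F : forall i j, (i<4)%nat -> (j<4)%nat -> is_derive (fun s => fst (A s i j)) t (fst (L i j))).
 { intros i j Hi Hj. apply is_derive_fst. apply HA; auto. }
 unfold phi.
 apply (is_derive_minus (V := R_NormedModule)).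
 apply (is_derive_plus (V := R_NormedModule)).
 apply is_derive_scal. apply F; lia.
 apply is_derive_scal.
 repeat apply (is_derive_plus (V := R_NormedModule)); apply F; lia.
 apply is_derive_scal. apply F; lia.
Qed.
Lemma phi_eq h J M : Re (trace (mmul (HB h J) M)) = phi h J M.
Proof. unfold Re, trace, mmul, HB, phi; simpl. ring. Qed.
Lemma phi_add h J A B : phi h J (madd A B) = phi h J A + phi h J B.
Proof. unfold phi, madd; simpl. ring. Qed.
Lemma phi_scale h J g A : phi h J (mscale (RtoC g) A) = g * phi h J A.
Proof. unfold phi, mscale; simpl. ring. Qed.

Definition R0 (a b c : R) : Mat := fun i j =>
  match i, j with
  | 0, 0 => RtoC a
  | 0, 3 => RtoC b | 3, 0 => RtoC b
  | 3, 3 => RtoC c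
  | _, _ => RtoC 0 end%nat.

Lemma bf_val h J a b c :
  phi h J (madd (dissip_bf on1 (R0 a b c)) (dissip_bf on2 (R0 a b c))) = -2 * h * (a - c).
Proof.
  rewrite phi_add.
  unfold phi, dissip_bf, msub, mmul, R0, on1, on2, kron, sx, I2; simpl.
  ring.
Qed.

Lemma key h J Ga G M :
  phi h J (lindblad h J Ga G M) - phi h J (lindblad h J Ga 0 M)
  = G * phi h J (madd (dissip_bf on1 M) (dissip_bf on2 M)).
Proof. unfold lindblad. rewrite !phi_add, !phi_scale, !phi_add. ring. Qed.

Lemma rho0_R0 h J : rho0 h J = R0 (pp h J ^ 2 / (1 + pp h J ^ 2)) (pp h J / (1 + pp h J ^ 2)) (1 / (1 + pp h J ^ 2)).
Proof. reflexivity. Qed.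

Lemma pp_small h J : 0 < h -> 0 < J -> J / h < 8 / 9 -> pp h J ^ 2 < 1.
Proof.
  intros Hh HJ Hr.
  assert (HJh : 9 * J < 8 * h).
  { apply Rmult_lt_compat_r with (r := h) in Hr; auto.
    unfold Rdiv in Hr. rewrite Rmult_assoc, Rinv_l in Hr by lra. lra. }
  unfold pp, e0.
  set (s := sqrt (h ^ 2 + 5 * J ^ 2 / 8)).
  assert (Hs2 : s * s = h ^ 2 + 5 * J ^ 2 / 8).
  { unfold s. apply sqrt_sqrt. nra. }
  assert (Hs0 : 0 <= s) by (unfold s; apply sqrt_pos).
  assert (Hsh : h < s) by nra.
  assert (Hs : s < h + J / 4) by nra.
  replace ((4 * (h + - s) / J) ^ 2) with (16 * (s - h) ^ 2 / J ^ 2) by (field; lra).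
  apply Rmult_lt_reg_r with (r := J ^ 2). nra.
  unfold Rdiv. rewrite Rmult_assoc, Rinv_l by nra. nra.
Qed.
Lemma Rball (x : R) (e : R) y : Rabs (y - x) < e -> @ball R_UniformSpace x e y.
Proof. intros H. exact H. Qed.
Lemma Rball' (x : R) (e : R) y : @ball R_UniformSpace x e y -> Rabs (y - x) < e.
Proof. intros H. exact H. Qed.

Lemma cvR_eps f l : cvR f l -> forall e, 0 < e -> exists d, 0 < d /\ forall y, 0 < y < d -> Rabs (f y - l) < e.
Proof.
  intros H e He. unfold cvR in H. rewrite filterlim_locally in H.
  destruct (H (mkposreal e He)) as [d Hd].
  exists d. split. apply cond_pos. intros y [Hy1 Hy2].
  apply Rball'. apply Hd; [|exact Hy1]. apply Rball. rewrite Rminus_0_r, Rabs_pos_eq; lra.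
Qed.

Lemma deriv_minus (u v : R -> R) a b t :
  is_derive u t a -> is_derive v t b -> is_derive (fun s => u s - v s) t (a - b).
Proof. intros Hu Hv. apply (is_derive_minus (V := R_NormedModule)); auto. Qed.

Theorem theorem2 (h J Gabs Gdph : R) (rhoN rhoG : R -> Mat) :
  0 < h -> 0 < J -> J / h < 8 / 9 -> 0 < Gabs -> 0 < Gdph ->
  is_solution h J Gabs 0 rhoN ->
  is_solution h J Gabs Gdph rhoG ->
  exists tstar, 0 < tstar /\
    forall t, 0 < t < tstar -> work h J rhoG t > work h J rhoN t.
Proof.
  intros Hh HJ Hr Ha Hg [N0 [Ncv Nd]] [G0 [Gcv Gd]].
  set (f := fun t => phi h J (rhoG t) - phi h J (rhoN t)).
  set (g := fun t => phi h J (lindblad h J Gabs Gdph (rhoG t)) - phi h J (lindblad h J Gabs 0 (rhoN t))).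
  set (c0 := phi h J (lindblad h J Gabs Gdph (rho0 h J)) - phi h J (lindblad h J Gabs 0 (rho0 h J))).
  assert (Hc0 : 0 < c0).
  { unfold c0. rewrite key, rho0_R0, bf_val.
    pose proof (pp_small h J Hh HJ Hr) as Hp.
    set (p := pp h J) in *.
    assert (0 <= p ^ 2) by nra.
    replace (p ^ 2 / (1 + p ^ 2) - 1 / (1 + p ^ 2)) with ((p ^ 2 - 1) / (1 + p ^ 2)) by (field; lra).
    apply Rmult_lt_0_compat; auto.
    unfold Rdiv. 
    assert (0 < / (1 + p ^ 2)) by (apply Rinv_0_lt_compat; lra).
    assert (0 < (1 - p ^ 2) * / (1 + p ^ 2)) by (apply Rmult_lt_0_compat; lra).
    nra. }
  assert (Hgcv : cvR g c0).
  { apply cvR_minus; apply Mcv_phi; apply Mcv_lindblad; intros i j Hi Hj; first [apply Gcv | apply Ncv]; auto. }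
  assert (Hfcv : cvR f 0).
  { replace 0 with (phi h J (rho0 h J) - phi h J (rho0 h J)) by ring.
    apply cvR_minus; apply Mcv_phi; intros i j Hi Hj; first [apply Gcv | apply Ncv]; auto. }
  assert (Hder : forall t, 0 < t -> is_derive f t (g t)).
  { intros t Ht. unfold f, g. apply deriv_minus.
    - apply phi_derive. intros i j Hi Hj. apply Gd; auto.
    - apply phi_derive. intros i j Hi Hj. apply Nd; auto. }
  assert (Hw : forall t, work h J rhoG t - work h J rhoN t = f t).
  { intros t. unfold work, f. rewrite !phi_eq. ring. }
  destruct (cvR_eps g c0 Hgcv (c0 / 2)) as [d [Hd Hgd]]; [lra|].
  exists d. split; [exact Hd|]. intros t [Ht1 Ht2].
  destruct (cvR_eps f 0 Hfcv (c0 * t / 4)) as [d2 [Hd2 Hfd]]; [nra|].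
  set (s := Rmin (t / 2) (d2 / 2)).
  assert (Hs1 : 0 < s) by (unfold s; apply Rmin_glb_lt; lra).
  assert (Hs2 : s <= t / 2) by (unfold s; apply Rmin_l).
  assert (Hs3 : s <= d2 / 2) by (unfold s; apply Rmin_r).
  destruct (MVT_gen f s t g) as [c [Hc Heq]].
  { intros x Hx. rewrite Rmin_left, Rmax_right in Hx by lra. apply Hder. lra. }
  { intros x Hx. rewrite Rmin_left, Rmax_right in Hx by lra.
    apply continuity_pt_filterlim. apply (ex_derive_continuous (K:=R_AbsRing) (V:=R_NormedModule) f x).
    exists (g x). apply Hder. lra. }
  rewrite Rmin_left, Rmax_right in Hc by lra.
  assert (Hgc : c0 / 2 < g c).
  { assert (Rabs (g c - c0) < c0 / 2) by (apply Hgd; lra).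
    apply Rabs_def2 in H. lra. }
  assert (Hfs : - (c0 * t / 4) < f s).
  { assert (Rabs (f s - 0) < c0 * t / 4) by (apply Hfd; lra).
    apply Rabs_def2 in H. lra. }
  pose proof (Hw t) as Hwt.
  assert (f t > 0) by nra.
  lra.
Qed.
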